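(* Let $n,x$ be integers with $1<x<n$, so that $G=C_{2n}(x,1,n)$ is a $5$-regular circulant graph. If $n\equiv 0 \pmod 3$, $x\equiv 1\pmod 3$ and $x<\tfrac{n}{2}$, then $G$ is word-representable.
   Context: Two distinct letters $x,y$ alternate in a word $w$ if, after deleting all other letters from $w$, the resulting word is of the form $xyxy\cdots$ or $yxyx\cdots$ (of even or odd length). A graph $G=(V,E)$ is word-representable if there is a word $w$ over the alphabet $V$, containing every letter of $V$ at least once, such that for all distinct $x,y\in V$, $xy\in E$ if and only if $x$ and $y$ alternate in $w$. For an integer $m$ and a set $R$ of positive integers each at most $m/2$, the circulant graph $C_m(R)$ has vertex set $\{0,1,\dots,m-1\}$, with $i$ and $j$ adjacent iff $\min(|i-j|,\,m-|i-j|)\in R$. $C_{2n}(x,1,n)$ denotes the circulant graph on $2n$ vertices with jump set $\{1,x,n\}$; it is $5$-regular exactly when $1<x<n$. *)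

(* Defs.v *)
From mathcomp Require Import all_boot.
Set Implicit Arguments. Unset Strict Implicit. Unset Printing Implicit Defensive.

Definition restrict2 (T : eqType) (w : seq T) (x y : T) : seq T :=
  [seq z <- w | (z == x) || (z == y)].

Definition altword (T : Type) (a b : T) (k : nat) : seq T :=
  mkseq (fun i => if odd i then b else a) k.

Definition alternate (T : eqType) (w : seq T) (x y : T) : Prop :=
  let s := restrict2 w x y in
  s = altword x y (size s) \/ s = altword y x (size s).

Definition word_representable (V : finType) (adj : V -> V -> bool) : Prop :=
  exists w : seq V,
    (forall v : V, v \in w) /\
    (forall u v : V, u != v -> (adj u v <-> alternate w u v)).

Definition cdist (m i j : nat) : nat :=
  let d := if i <= j then j - i else i - j in minn d (m - d).

Definition circulant_adj (m : nat) (R : pred nat) (i j : 'I_m) : bool :=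
  R (cdist m i j).

Definition C2n_x1n (n x : nat) : 'I_(2 * n) -> 'I_(2 * n) -> bool :=
  @circulant_adj (2 * n) (fun d => [|| d == 1, d == x | d == n]).
Arguments C2n_x1n n x : clear implicits.
Arguments circulant_adj m R : clear implicits.

(* Main.v *)
Require Import Defs.
From mathcomp Require Import all_boot zify.
Set Implicit Arguments. Unset Strict Implicit. Unset Printing Implicit Defensive.

Fixpoint alt (T : eqType) (s : seq T) : bool :=
  match s with
  | x :: ((y :: _) as s') => (x != y) && alt s'
  | _ => true
  end.

Lemma alt_cons (T : eqType) (x : T) s : alt (x :: s) -> alt s.
Proof. by case: s => //= y s /andP []. Qed.

Lemma alt_cons2 (T : eqType) (x y : T) s : alt [:: x, y & s] = (x != y) && alt (y :: s).
Proof. by []. Qed.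

Lemma alt_catr (T : eqType) (s1 s2 : seq T) : alt (s1 ++ s2) -> alt s2.
Proof. elim: s1 => //= x s1 IH H; apply: IH; exact: alt_cons H. Qed.

Lemma altwordS (T : Type) (a b : T) n : altword a b n.+1 = a :: altword b a n.
Proof.
rewrite /altword /mkseq /= -(addn0 1) iotaDl -map_comp; congr (_ :: _).
apply: eq_map => i /=.
by rewrite add0n; case: (odd i).
Qed.

Lemma alt_altword (T : eqType) n : forall (x y : T), x != y -> alt (altword x y n).
Proof.
elim: n => [//|n IH] x y xy; rewrite altwordS.
case: n IH => [//|n] IH; rewrite altwordS /= xy /=.
by have := IH y x; rewrite eq_sym xy altwordS; apply.
Qed.

Lemma alt_to_altword (T : eqType) (s : seq T) : forall x y, x != y ->
  all (fun z => (z == x) || (z == y)) (x :: s) -> alt (x :: s) ->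
  x :: s = altword x y (size s).+1.
Proof.
elim: s => [|z s IH] x y xy; first by rewrite altwordS.
rewrite /= => /and3P [_ Hz Ha] /andP [xz Hal].
have zy : z = y.
  by move: Hz xz; case/orP => /eqP -> //; rewrite eqxx.
subst z.
have yx : y != x by rewrite eq_sym.
have Hall : all (fun z => (z == y) || (z == x)) (y :: s).
  by rewrite /= eqxx /=; apply/allP => t ht; move/allP: Ha => /(_ t ht); rewrite orbC.
by rewrite (IH y x yx Hall Hal) [in RHS]altwordS.
Qed.

Lemma restrict2C (T : eqType) (w : seq T) u v : restrict2 w u v = restrict2 w v u.
Proof. by apply: eq_filter => z; rewrite orbC. Qed.

Lemma alternateP (T : eqType) (w : seq T) u v : u != v ->
  (alternate w u v <-> alt (restrict2 w u v)).
Proof.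
move=> uv; rewrite /alternate.
have Hall : all (fun z => (z == u) || (z == v)) (restrict2 w u v) by apply: filter_all.
split.
  by case=> ->; apply: alt_altword => //; rewrite eq_sym.
case E: (restrict2 w u v) Hall => [|z s]; first by left.
move=> Hall Ha.
have : (z == u) || (z == v) by case/andP: Hall.
case/orP=> /eqP ez; subst z.
  by left; exact: (alt_to_altword uv Hall Ha).
right; have vu : v != u by rewrite eq_sym.
apply: (alt_to_altword vu _ Ha).
by apply/allP => t ht; move/allP: Hall => /(_ t ht); rewrite orbC.
Qed.

Lemma prep_head (I T : eqType) (s : seq I) (g : I -> seq T) p q r :
  (forall y, y \in s -> g y = [:: p; q]) ->
  exists r', flatten (map g s) ++ p :: r = p :: r'.
Proof.
elim: s => [|y s IH] H /=; first by exists r.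
rewrite H ?mem_head //=; by exists (q :: flatten [seq g i | i <- s] ++ p :: r).
Qed.

Lemma prep (I T : eqType) (s : seq I) (g : I -> seq T) p q r :
  p != q -> (forall y, y \in s -> g y = [:: p; q] \/ g y = [:: q; p]) ->
  alt (p :: r) ->
  (alt (flatten (map g s) ++ p :: r) <-> (forall y, y \in s -> g y = [:: p; q])).
Proof.
move=> pq; elim: s => [|y s IH] Hg Hr /=; first by split.
have IH' := IH (fun z hz => Hg z (@mem_behead _ (y :: s) z hz)) Hr.
case: (Hg y (mem_head _ _)) => Ey; rewrite Ey.
  split.
    move/alt_cons/alt_cons => /IH' Hs z; rewrite inE => /orP [/eqP -> | hz] //.
    exact: Hs.
  move=> Hs; have Hs' : forall z, z \in s -> g z = [:: p; q] by move=> z hz; apply: Hs; rewrite inE hz orbT.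
  have [r' Er'] := prep_head r Hs'.
  by rewrite -catA Er' 2!alt_cons2 pq eq_sym pq !andTb -Er'; apply/IH'.
split => //.
  move=> Ha; exfalso.
  have Ha' : alt (flatten [seq g i | i <- s] ++ p :: r) by move: Ha; rewrite -catA; move/alt_cons/alt_cons.
  have Hs := proj1 IH' Ha'.
  have [r' Er'] := prep_head r Hs.
  by move: Ha; rewrite -catA Er' 2!alt_cons2 eqxx /= andbF.
by move=> Hs; have := Hs y (mem_head _ _); rewrite Ey => -[] /eqP; rewrite eq_sym (negbTE pq).
Qed.


Lemma restrict2_cat (T : eqType) (s1 s2 : seq T) u v :
  restrict2 (s1 ++ s2) u v = restrict2 s1 u v ++ restrict2 s2 u v.
Proof. exact: filter_cat. Qed.

Lemma restrict2_cons (T : eqType) (x : T) s u v :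
  restrict2 (x :: s) u v = if (x == u) || (x == v) then x :: restrict2 s u v else restrict2 s u v.
Proof. by []. Qed.

Lemma restrict2_nil (T : eqType) (u v : T) : restrict2 [::] u v = [::].
Proof. by []. Qed.

Lemma restrict2_flatten (I T : eqType) (s : seq I) (f : I -> seq T) u v :
  restrict2 (flatten (map f s)) u v = flatten (map (fun y => restrict2 (f y) u v) s).
Proof. by elim: s => //= y s IH; rewrite restrict2_cat IH. Qed.

Ltac zcase z u v :=
  case: (eqVneq z u) => [?|zu]; [subst z | case: (eqVneq z v) => [?|zv]; [subst z|]].

Lemma rfe (V : finType) (P : pred V) u v : u != v ->
  restrict2 [seq z <- enum V | P z] u v =
  if P u && P v then restrict2 (enum V) u v
  else (if P u then [:: u] else [::]) ++ (if P v then [:: v] else [::]).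
Proof.
move=> uv; rewrite /restrict2 -filter_predI.
have uvF : (u == v) = false by apply/negbTE.
have vuF : (v == u) = false by rewrite eq_sym uvF.
case Pu: (P u); case Pv: (P v) => /=.
- apply: eq_in_filter => z _ /=.
  by zcase z u v; rewrite /= ?eqxx ?uvF ?vuF ?Pu ?Pv ?(negbTE zu) ?(negbTE zv) ?andbF ?andbT.
- rewrite -(filter_pred1_uniq (enum_uniq V) (mem_enum V u)).
  apply: eq_in_filter => z _ /=.
  by zcase z u v; rewrite /= ?eqxx ?uvF ?vuF ?Pu ?Pv ?(negbTE zu) ?(negbTE zv) ?andbF ?andbT.
- rewrite -(filter_pred1_uniq (enum_uniq V) (mem_enum V v)).
  apply: eq_in_filter => z _ /=.
  by zcase z u v; rewrite /= ?eqxx ?uvF ?vuF ?Pu ?Pv ?(negbTE zu) ?(negbTE zv) ?andbF ?andbT.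
- rewrite -(filter_pred0 (enum V)).
  apply: eq_in_filter => z _ /=.
  by zcase z u v; rewrite /= ?eqxx ?uvF ?vuF ?Pu ?Pv ?(negbTE zu) ?(negbTE zv) ?andbF ?andbT.
Qed.

Lemma renum (V : finType) (u v : V) : u != v ->
  restrict2 (enum V) u v = [:: u; v] \/ restrict2 (enum V) u v = [:: v; u].
Proof.
move=> uv; set s := restrict2 (enum V) u v.
have Hs : s =i [:: u; v].
  by move=> z; rewrite /s /restrict2 mem_filter mem_enum !inE andbT.
have us : uniq s by rewrite /s /restrict2 filter_uniq // enum_uniq.
have u2 : uniq [:: u; v] by rewrite /= inE uv.
have sz : size s = 2 by rewrite (perm_size (uniq_perm us u2 Hs)).
have hu : u \in s by rewrite Hs mem_head.
have hv : v \in s by rewrite Hs !inE eqxx orbT.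
move: sz us hu hv Hs; case: s => [|a [|b [|]]] //= _.
rewrite !inE andbT => ab.
case/orP=> /eqP ea; case/orP=> /eqP eb; subst; move=> _.
all: try by rewrite eqxx in uv.
all: try by rewrite eqxx in ab.
all: by [left | right].
Qed.


Definition cls (V : finType) (col : V -> nat) k := [seq z <- enum V | col z == k].

Definition Kb (V : finType) (adj : V -> V -> bool) (col : V -> nat) X Y Z (y : V) :=
  [seq z <- enum V | (col z == X) && adj y z] ++ y ::
  [seq z <- enum V | (col z == X) && ~~ adj y z] ++
  [seq z <- enum V | (col z == Y) && (z != y)] ++ cls col Z.

Definition Pb (V : finType) adj (col : V -> nat) X Y Z :=
  flatten [seq Kb adj col X Y Z y | y <- cls col Y].

Lemma KXY (V : finType) adj (col : V -> nat) X Y Z u v y :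
  X != Y -> Y != Z -> X != Z -> col u = X -> col v = Y -> col y = Y ->
  restrict2 (Kb adj col X Y Z y) u v =
  if y == v then (if adj y u then [:: u; v] else [:: v; u]) else [:: u; v].
Proof.
move=> /negbTE xy /negbTE yz /negbTE xz cu cv cy.
have yx : (Y == X) = false by rewrite eq_sym.
have zy : (Z == Y) = false by rewrite eq_sym.
have zx : (Z == X) = false by rewrite eq_sym.
have uv : u != v by apply/eqP => e; move: cu; rewrite e cv => /eqP; rewrite yx.
have yu : (y == u) = false by apply/negbTE/eqP => e; move: cu; rewrite -e cy => /eqP; rewrite yx.
rewrite /Kb /cls !(restrict2_cat, restrict2_cons, rfe _ uv) cu cv !eqxx ?xy ?yz ?xz ?yx ?zy ?zx yu /=.
rewrite !andbF; case: (eqVneq y v) => [e|yv].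
  by subst y; case: (adj v u).
by case: (adj y u).
Qed.

Lemma KXZ (V : finType) adj (col : V -> nat) X Y Z u v y :
  X != Y -> Y != Z -> X != Z -> col u = X -> col v = Z -> col y = Y ->
  restrict2 (Kb adj col X Y Z y) u v = [:: u; v].
Proof.
move=> /negbTE xy /negbTE yz /negbTE xz cu cv cy.
have yx : (Y == X) = false by rewrite eq_sym.
have zy : (Z == Y) = false by rewrite eq_sym.
have zx : (Z == X) = false by rewrite eq_sym.
have uv : u != v by apply/eqP => e; move: cu; rewrite e cv => /eqP; rewrite zx.
have yu : (y == u) = false by apply/negbTE/eqP => e; move: cu; rewrite -e cy => /eqP; rewrite yx.
have yv : (y == v) = false by apply/negbTE/eqP => e; move: cv; rewrite -e cy => /eqP; rewrite eq_sym zy.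
rewrite /Kb /cls !(restrict2_cat, restrict2_cons, rfe _ uv) cu cv !eqxx ?xy ?yz ?xz ?yx ?zy ?zx yu yv /=.
by rewrite !andbF; case: (adj y u).
Qed.

Lemma KYZ (V : finType) adj (col : V -> nat) X Y Z u v y :
  X != Y -> Y != Z -> X != Z -> col u = Y -> col v = Z -> col y = Y ->
  restrict2 (Kb adj col X Y Z y) u v = [:: u; v].
Proof.
move=> /negbTE xy /negbTE yz /negbTE xz cu cv cy.
have yx : (Y == X) = false by rewrite eq_sym.
have zy : (Z == Y) = false by rewrite eq_sym.
have zx : (Z == X) = false by rewrite eq_sym.
have uv : u != v by apply/eqP => e; move: cu; rewrite e cv => /eqP; rewrite zy.
have yv : (y == v) = false by apply/negbTE/eqP => e; move: cv; rewrite -e cy => /eqP; rewrite eq_sym zy.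
rewrite /Kb /cls !(restrict2_cat, restrict2_cons, rfe _ uv) cu cv !eqxx ?xy ?yz ?xz ?yx ?zy ?zx yv /=.
rewrite !andbF /=.
by case: (eqVneq y u) => [->|yu] //=.
Qed.

Lemma KYY (V : finType) adj (col : V -> nat) X Y Z u v y :
  X != Y -> Y != Z -> X != Z -> u != v -> col u = Y -> col v = Y -> col y = Y ->
  restrict2 (Kb adj col X Y Z y) u v =
  if y == u then [:: u; v] else if y == v then [:: v; u] else restrict2 (enum V) u v.
Proof.
move=> /negbTE xy /negbTE yz /negbTE xz uv cu cv cy.
have yx : (Y == X) = false by rewrite eq_sym.
have zy : (Z == Y) = false by rewrite eq_sym.
have zx : (Z == X) = false by rewrite eq_sym.
rewrite /Kb /cls !(restrict2_cat, restrict2_cons, rfe _ uv) cu cv !eqxx ?xy ?yz ?xz ?yx ?zy ?zx /=.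
case: (eqVneq y u) => [->|yu] /=.
  by rewrite eq_sym uv.
case: (eqVneq y v) => [e|yv] /=.
  by subst y.
by rewrite cats0.
Qed.


Definition altH (T : eqType) (p : T) s := exists r, s = p :: r /\ alt (p :: r).

Lemma altH_cons (T : eqType) (p q : T) s : altH p s -> q != p -> altH q (q :: s).
Proof. by case=> r [-> Ha] qp; exists (p :: r); split => //; rewrite alt_cons2 qp. Qed.

Lemma altH_prep (I T : eqType) (ss : seq I) (g : I -> seq T) p q s :
  altH p s -> p != q -> (forall y, y \in ss -> g y = [:: p; q]) ->
  altH p (flatten (map g ss) ++ s).
Proof.
case=> r [-> Ha] pq Hg.
have [r' Er] := prep_head r Hg.
exists r'; rewrite -Er; split => //.
apply: (proj2 (prep pq (fun y hy => or_introl (Hg y hy)) Ha)) => //.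
Qed.

Lemma prep_iff (I T : eqType) (ss : seq I) (g : I -> seq T) (P : pred I) p q r :
  p != q -> alt (p :: r) ->
  (forall y, y \in ss -> g y = if P y then [:: p; q] else [:: q; p]) ->
  (alt (flatten (map g ss) ++ p :: r) <-> (forall y, y \in ss -> P y)).
Proof.
move=> pq Ha Hg.
have Hg' : forall y, y \in ss -> g y = [:: p; q] \/ g y = [:: q; p].
  by move=> y hy; rewrite Hg //; case: (P y); [left|right].
have [P1 P2] := prep pq Hg' Ha; split=> H.
  move=> y hy; have := P1 H y hy; rewrite Hg //; case: (P y) => // -[] /eqP.
  by rewrite eq_sym (negbTE pq).
by apply: P2 => y hy; rewrite Hg // H.
Qed.

Lemma RP (V : finType) adj (col : V -> nat) X Y Z u v :
  restrict2 (Pb adj col X Y Z) u v =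
  flatten [seq restrict2 (Kb adj col X Y Z y) u v | y <- cls col Y].
Proof. exact: restrict2_flatten. Qed.

Lemma RC (V : finType) (col : V -> nat) k u v : u != v ->
  restrict2 (cls col k) u v =
  if (col u == k) && (col v == k) then restrict2 (enum V) u v
  else (if col u == k then [:: u] else [::]) ++ (if col v == k then [:: v] else [::]).
Proof. exact: rfe. Qed.

Lemma in_cls (V : finType) (col : V -> nat) k y : y \in cls col k -> col y = k.
Proof. by rewrite mem_filter => /andP [/eqP]. Qed.

Lemma mem_cls (V : finType) (col : V -> nat) y : y \in cls col (col y).
Proof. by rewrite mem_filter eqxx mem_enum. Qed.

Definition wrd (V : finType) adj (col : V -> nat) :=
  Pb adj col 0 1 2 ++ cls col 0 ++ Pb adj col 1 2 0 ++ cls col 1 ++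
  Pb adj col 2 0 1 ++ cls col 2 ++ cls col 0 ++ cls col 1 ++ cls col 2.

Lemma case01 (V : finType) adj (col : V -> nat) u v :
  (forall a b, adj a b = adj b a) -> col u = 0 -> col v = 1 ->
  (alt (restrict2 (wrd adj col) u v) <-> adj u v).
Proof.
move=> adjC cu cv.
have uv : u != v by apply/eqP => e; rewrite e cv in cu.
rewrite /wrd !restrict2_cat !RP !(RC _ _ uv) cu cv /=.
have vu : v != u by rewrite eq_sym.
have A1 : altH u [:: u; v] by exists [:: v]; rewrite /= uv.
have A2 := altH_prep A1 uv (fun y hy => @KYZ _ adj col 2 0 1 u v y isT isT isT cu cv (in_cls hy)).
have A3 := altH_cons A2 vu.
have A4 : altH v (flatten [seq restrict2 (Kb adj col 1 2 0 y) u v | y <- cls col 2] ++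
                  v :: flatten [seq restrict2 (Kb adj col 2 0 1 y) u v | y <- cls col 0] ++ [:: u; v]).
  apply: altH_prep A3 vu _ => y hy; rewrite restrict2C.
  exact: (@KXZ _ adj col 1 2 0 v u y isT isT isT cv cu (in_cls hy)).
have [r [Er Ar]] := altH_cons A4 uv.
have Hg : forall y, y \in cls col 1 -> restrict2 (Kb adj col 0 1 2 y) u v =
   if (y != v) || adj y u then [:: u; v] else [:: v; u].
  move=> y hy; rewrite (@KXY _ adj col 0 1 2 u v y isT isT isT cu cv (in_cls hy)).
  by case: (eqVneq y v) => //= _; case: (adj y u).
rewrite Er; apply: iff_trans (prep_iff uv Ar Hg) _.
split; last by move=> H y _; case: (eqVneq y v) => [->|] //=; rewrite adjC.
by move=> H; have := H v; rewrite -{1}cv mem_cls eqxx /= adjC; apply.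
Qed.

Lemma altH_alt (T : eqType) (p : T) s : altH p s -> alt s.
Proof. by case=> r [-> ]. Qed.

Lemma case02 (V : finType) adj (col : V -> nat) u v :
  (forall a b, adj a b = adj b a) -> col u = 0 -> col v = 2 ->
  (alt (restrict2 (wrd adj col) u v) <-> adj u v).
Proof.
move=> adjC cu cv.
have uv : u != v by apply/eqP => e; rewrite e cv in cu.
have vu : v != u by rewrite eq_sym.
rewrite /wrd !restrict2_cat !RP !(RC _ _ uv) cu cv /=.
have Ar : alt [:: v, u & [:: v]] by rewrite /= uv vu.
have Hg : forall y, y \in cls col 0 -> restrict2 (Kb adj col 2 0 1 y) u v =
   if (y != u) || adj y v then [:: v; u] else [:: u; v].
  move=> y hy; rewrite restrict2C (@KXY _ adj col 2 0 1 v u y isT isT isT cv cu (in_cls hy)).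
  by case: (eqVneq y u) => //= _; case: (adj y v).
have key := prep_iff vu Ar Hg.
have E : (forall y, y \in cls col 0 -> (y != u) || adj y v) <-> adj u v.
  split; last by move=> H y _; case: (eqVneq y u) => [->|] //=; rewrite adjC.
  by move=> H; have := H u; rewrite -{1}cu mem_cls eqxx /= adjC; apply.
split.
  move/alt_catr/alt_cons/alt_catr => H; exact/E/key.
move=> H.
have A1 : altH v (flatten [seq restrict2 (Kb adj col 2 0 1 y) u v | y <- cls col 0] ++ [:: v, u & [:: v]]).
  apply: (altH_prep (q:=u)) => //; first by exists [:: u; v].
  by move=> y hy; rewrite Hg // (proj2 E H).
have A2 := altH_prep A1 vu (fun y hy => etrans (restrict2C _ _ _)
   (@KYZ _ adj col 1 2 0 v u y isT isT isT cv cu (in_cls hy))).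
have A3 := altH_cons A2 uv.
apply: altH_alt; apply: altH_prep A3 uv _ => y hy.
exact: (@KXZ _ adj col 0 1 2 u v y isT isT isT cu cv (in_cls hy)).
Qed.

Lemma case12 (V : finType) adj (col : V -> nat) u v :
  (forall a b, adj a b = adj b a) -> col u = 1 -> col v = 2 ->
  (alt (restrict2 (wrd adj col) u v) <-> adj u v).
Proof.
move=> adjC cu cv.
have uv : u != v by apply/eqP => e; rewrite e cv in cu.
have vu : v != u by rewrite eq_sym.
rewrite /wrd !restrict2_cat !RP !(RC _ _ uv) cu cv /=.
have A0 : altH v [:: v; u; v] by exists [:: u; v]; rewrite /= uv vu.
have A1 := altH_prep A0 vu (fun y hy => etrans (restrict2C _ _ _)
   (@KXZ _ adj col 2 0 1 v u y isT isT isT cv cu (in_cls hy))).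
have [r [Er Ar]] := altH_cons A1 uv.
rewrite Er.
have Hg : forall y, y \in cls col 2 -> restrict2 (Kb adj col 1 2 0 y) u v =
   if (y != v) || adj y u then [:: u; v] else [:: v; u].
  move=> y hy; rewrite (@KXY _ adj col 1 2 0 u v y isT isT isT cu cv (in_cls hy)).
  by case: (eqVneq y v) => //= _; case: (adj y u).
have key := prep_iff uv Ar Hg.
have E : (forall y, y \in cls col 2 -> (y != v) || adj y u) <-> adj u v.
  split; last by move=> H y _; case: (eqVneq y v) => [->|] //=; rewrite adjC.
  by move=> H; have := H v; rewrite -{1}cv mem_cls eqxx /= adjC; apply.
split.
  move/alt_catr => H; exact/E/key.
move=> H.
have A2 : altH u (flatten [seq restrict2 (Kb adj col 1 2 0 y) u v | y <- cls col 2] ++ u :: r).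
  apply: (altH_prep (q:=v)) => //; first by exists r.
  by move=> y hy; rewrite Hg // (proj2 E H).
apply: altH_alt; apply: altH_prep A2 uv _ => y hy.
exact: (@KYZ _ adj col 0 1 2 u v y isT isT isT cu cv (in_cls hy)).
Qed.

Lemma nalt_cat (T : eqType) (s1 s2 : seq T) : ~~ alt s2 -> ~~ alt (s1 ++ s2).
Proof. by apply: contra => /alt_catr. Qed.

Lemma same_inner (V : finType) adj (col : V -> nat) X Y Z u v r :
  X != Y -> Y != Z -> X != Z -> u != v -> col u = Y -> col v = Y ->
  alt (u :: r) -> ~~ alt (restrict2 (Pb adj col X Y Z) u v ++ u :: r).
Proof.
move=> xy yz xz uv cu cv Ar; rewrite RP.
have Hg : forall y, y \in cls col Y -> restrict2 (Kb adj col X Y Z y) u v = [:: u; v] \/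
   restrict2 (Kb adj col X Y Z y) u v = [:: v; u].
  move=> y hy; rewrite (KYY adj xy yz xz uv cu cv (in_cls hy)).
  case: (y == u); first by left.
  case: (y == v); first by right.
  exact: renum.
apply/negP => /(proj1 (prep uv Hg Ar)) H.
have := H v; rewrite -{1}cv mem_cls => /(_ isT).
rewrite (KYY adj xy yz xz uv cu cv cv) eqxx eq_sym (negbTE uv) => -[] /eqP.
by rewrite eq_sym (negbTE uv).
Qed.

Lemma same_break (V : finType) adj (col : V -> nat) X Y Z u v s :
  X != Y -> Y != Z -> X != Z -> u != v -> col u = Y -> col v = Y -> u \in s ->
  ~~ alt (restrict2 (Pb adj col X Y Z) u v ++ restrict2 s u v).
Proof.
move=> xy yz xz uv cu cv us.
case Ha: (alt (restrict2 s u v)); last by apply: nalt_cat; rewrite Ha.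
have : u \in restrict2 s u v by rewrite mem_filter eqxx us.
have Hall : all (fun z => (z == u) || (z == v)) (restrict2 s u v) by apply: filter_all.
case E: (restrict2 s u v) Ha Hall => [|x r] //= Ha /andP [hx _] _.
case/orP: hx => /eqP ex; subst x.
  exact: same_inner.
rewrite (restrict2C (Pb adj col X Y Z)).
apply: same_inner => //; by rewrite eq_sym.
Qed.

Lemma three_col_wr (V : finType) (adj : V -> V -> bool) (col : V -> nat) :
  (forall a b, adj a b = adj b a) -> (forall a b, adj a b -> col a != col b) ->
  (forall a, col a < 3) -> word_representable adj.
Proof.
move=> adjC prop c3; exists (wrd adj col); split.
  move=> v; rewrite /wrd !mem_cat.
  have := c3 v; have := mem_cls col v.
  by case: (col v) => [|[|[|]]] // ->; rewrite !orbT.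
have key : forall u v, u != v -> col u <= col v -> (adj u v <-> alt (restrict2 (wrd adj col) u v)).
  move=> u v uv le.
  have cu3 := c3 u; have cv3 := c3 v.
  move: le cu3 cv3; case Eu: (col u) => [|[|[|]]] //; case Ev: (col v) => [|[|[|]]] // _ _ _.
  - split; first by move/prop; rewrite Eu Ev.
    move=> H; exfalso; move: H; apply/negP.
    rewrite /wrd 5!restrict2_cat; do 4! apply: nalt_cat.
    apply: (@same_break _ adj col 2 0 1) => //.
    by rewrite !mem_cat -Eu mem_cls !orbT.
  - by apply: iff_sym; apply: case01.
  - by apply: iff_sym; apply: case02.
  - split; first by move/prop; rewrite Eu Ev.
    move=> H; exfalso; move: H; apply/negP.
    rewrite /wrd restrict2_cat.
    apply: (@same_break _ adj col 0 1 2) => //.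
    by rewrite !mem_cat -Eu mem_cls !orbT.
  - by apply: iff_sym; apply: case12.
  - split; first by move/prop; rewrite Eu Ev.
    move=> H; exfalso; move: H; apply/negP.
    rewrite /wrd 3!restrict2_cat; do 2! apply: nalt_cat.
    apply: (@same_break _ adj col 1 2 0) => //.
    by rewrite !mem_cat -Eu mem_cls !orbT.
move=> u v uv; apply: (iff_trans _ (iff_sym (alternateP _ uv))).
case: (leqP (col u) (col v)) => [le|lt]; first exact: key.
rewrite adjC restrict2C; apply: key; first by rewrite eq_sym.
exact: ltnW.
Qed.


Definition colf (n x i : nat) : nat :=
  if i < n then i %% 3 else if i < n + x then (i + 1) %% 3 else (i + 2) %% 3.

Lemma colf_lt3 n x i : colf n x i < 3.
Proof. by rewrite /colf; case: ifP => _; [|case: ifP => _]; rewrite ltn_mod. Qed.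

Lemma cdistC m i j : cdist m i j = cdist m j i.
Proof.
rewrite /cdist; case: (leqP i j) => h1; case: (leqP j i) => h2 //; lia.
Qed.

Lemma colf_proper n x a b : 1 < x -> x < n -> n %% 3 = 0 -> x %% 3 = 1 -> 2 * x < n ->
  a < 2 * n -> b < 2 * n ->
  [|| cdist (2 * n) a b == 1, cdist (2 * n) a b == x | cdist (2 * n) a b == n] ->
  colf n x a != colf n x b.
Proof.
move=> h1 h2 h3 h4 h5 ha hb.
rewrite /cdist /colf.
case: (leqP a b) => hab; case: (ltnP a n) => han; case: (ltnP b n) => hbn;
 try case: (ltnP a (n + x)) => hax; try case: (ltnP b (n + x)) => hbx;
 move=> H; apply/eqP => E; move: H; lia.
Qed.


Theorem theorem23 (n x : nat) :
  1 < x -> x < n ->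
  n %% 3 = 0 -> x %% 3 = 1 -> 2 * x < n ->
  word_representable (C2n_x1n n x).
Proof.
move=> h1 h2 h3 h4 h5.
apply: (@three_col_wr _ (C2n_x1n n x) (fun i : 'I_(2 * n) => colf n x i)).
- by move=> a b; rewrite /C2n_x1n /circulant_adj cdistC.
- move=> a b; rewrite /C2n_x1n /circulant_adj => H.
  by apply: colf_proper => //; apply: ltn_ord.
- by move=> a; apply: colf_lt3.
Qed.
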